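(* Counting the solutions of nondeterministic constraint logic (NCL) instances is not $\mathsf{\#P}$-complete under parsimonious reductions.
   Context: An NCL instance is a 3-regular undirected graph whose edges are colored blue or red, with each vertex incident to either exactly one or exactly three blue edges. A solution is an orientation of its edges such that every vertex has at least one incoming blue edge or at least two incoming red edges. A parsimonious reduction from counting problem $X$ to counting problem $Y$ is a polynomial-time transformation of instances of $X$ into instances of $Y$ with the same number of solutions. *)

(* Defs.v *)
From mathcomp Require Import all_boot.
Set Implicit Arguments. Unset Strict Implicit. Unset Printing Implicit Defensive.

Record ncl_graph := NclGraph {
  nv : nat;
  ne : nat;
  ends : 'I_ne -> 'I_nv * 'I_nv;
  blue : 'I_ne -> bool
}.

Definition incident (G : ncl_graph) (v : 'I_(nv G)) (e : 'I_(ne G)) : bool :=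
  ((ends e).1 == v) || ((ends e).2 == v).

Definition degree (G : ncl_graph) (v : 'I_(nv G)) : nat :=
  #|[set e | incident v e]|.

Definition blue_degree (G : ncl_graph) (v : 'I_(nv G)) : nat :=
  #|[set e | blue e && incident v e]|.

Definition ncl_instance (G : ncl_graph) : Prop :=
  [/\ 0 < nv G,
      (forall e : 'I_(ne G), (ends e).1 != (ends e).2),
      (forall v : 'I_(nv G), degree v = 3) &
      (forall v : 'I_(nv G), blue_degree v = 1 \/ blue_degree v = 3)].

(* An orientation: [o e = false] directs e from (ends e).1 to (ends e).2 (head = (ends e).2); [o e = true] reverses it. *)
Definition head (G : ncl_graph) (o : {ffun 'I_(ne G) -> bool}) (e : 'I_(ne G))
  : 'I_(nv G) := if o e then (ends e).1 else (ends e).2.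

Definition in_blue (G : ncl_graph) (o : {ffun 'I_(ne G) -> bool}) (v : 'I_(nv G)) : nat :=
  #|[set e | blue e && (head o e == v)]|.

Definition in_red (G : ncl_graph) (o : {ffun 'I_(ne G) -> bool}) (v : 'I_(nv G)) : nat :=
  #|[set e | ~~ blue e && (head o e == v)]|.

Definition ncl_solution (G : ncl_graph) (o : {ffun 'I_(ne G) -> bool}) : bool :=
  [forall v, (1 <= in_blue o v) || (2 <= in_red o v)].

Definition count_ncl (G : ncl_graph) : nat :=
  #|[set o : {ffun 'I_(ne G) -> bool} | ncl_solution o]|.

(* A CNF formula over [nvars] variables: a list of clauses, each a list of
   literals (variable, polarity). *)
Record cnf := Cnf {
  nvars : nat;
  clauses : seq (seq ('I_nvars * bool))
}.

Definition sat_assign (F : cnf) (a : {ffun 'I_(nvars F) -> bool}) : bool :=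
  all (fun c => has (fun l => a l.1 == l.2) c) (clauses F).

Definition count_sat (F : cnf) : nat :=
  #|[set a : {ffun 'I_(nvars F) -> bool} | sat_assign a]|.

(* Main.v *)
Require Import Defs.
From mathcomp Require Import all_boot.
Require Import Defs.

Set Implicit Arguments. Unset Strict Implicit. Unset Printing Implicit Defensive.

Definition flipo (G : ncl_graph) (o : {ffun 'I_(ne G) -> bool}) (e : 'I_(ne G))
  : {ffun 'I_(ne G) -> bool} := [ffun e' => if e' == e then ~~ o e' else o e'].

Definition revo (G : ncl_graph) (o : {ffun 'I_(ne G) -> bool})
  : {ffun 'I_(ne G) -> bool} := [ffun e => ~~ o e].

Lemma head_flip_ne G (o : {ffun 'I_(ne G) -> bool}) e e' :
  e' != e -> head (flipo o e) e' = head o e'.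
Proof. by move=> H; rewrite /head /flipo ffunE (negbTE H). Qed.

Lemma flip_neq G (o : {ffun 'I_(ne G) -> bool}) e : flipo o e != o.
Proof.
apply/eqP => H; have := congr1 (fun f : {ffun _ -> bool} => f e) H.
by rewrite /flipo ffunE eqxx; case: (o e).
Qed.

Lemma head_rev G (o : {ffun 'I_(ne G) -> bool}) e v :
  (ends e).1 != (ends e).2 ->
  (head (revo o) e == v) = incident v e && (head o e != v).
Proof.
rewrite /head /revo /incident ffunE.
case: (ends e) => a b /= Hab.
case: (o e) => /=.
- case: (b =P v) => [<-|] /=; first by rewrite Hab orbT.
  by rewrite orbF; case: (a =P v).
- case: (a =P v) => [<-|] /=; first by rewrite eq_sym Hab.
  by case: (b =P v).
Qed.

Lemma crit G (o : {ffun 'I_(ne G) -> bool}) e :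
  ncl_solution o -> ~~ ncl_solution (flipo o e) ->
  [set e' | blue e' && (head o e' == head o e)] :\ e = set0 /\
  #|[set e' | ~~ blue e' && (head o e' == head o e)] :\ e| <= 1.
Proof.
move=> Hs /forallPn [w Hw].
have Hwv : w = head o e.
  apply/eqP; apply/negPn/negP => Hne.
  move/forallP: Hs => /(_ w) Hsw.
  have sub1 : [set e' | blue e' && (head o e' == w)] \subset
              [set e' | blue e' && (head (flipo o e) e' == w)].
    apply/subsetP => e'; rewrite !inE; case/andP => -> /eqP Hh.
    case: (eqVneq e' e) => [Hee|Hee].
      by move: Hh; rewrite Hee => Hh; rewrite Hh eqxx in Hne.
    by rewrite (head_flip_ne o Hee) Hh eqxx.
  have sub2 : [set e' | ~~ blue e' && (head o e' == w)] \subset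
              [set e' | ~~ blue e' && (head (flipo o e) e' == w)].
    apply/subsetP => e'; rewrite !inE; case/andP => -> /eqP Hh.
    case: (eqVneq e' e) => [Hee|Hee].
      by move: Hh; rewrite Hee => Hh; rewrite Hh eqxx in Hne.
    by rewrite (head_flip_ne o Hee) Hh eqxx.
  move: Hw; rewrite /in_blue /in_red.
  case/orP: Hsw => H.
    by rewrite (leq_trans H (subset_leq_card sub1)).
  by rewrite (leq_trans H (subset_leq_card sub2)) orbT.
subst w.
move: Hw; rewrite negb_or -!ltnNge !ltnS => /andP [H1 H2].
split.
  apply/eqP; rewrite -cards_eq0 -leqn0; apply: leq_trans H1.
  apply: subset_leq_card; apply/subsetP => e'; rewrite !inE.
  by case/and3P => He' -> /eqP Hh; rewrite (head_flip_ne o He') Hh eqxx.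
apply: leq_trans H2.
apply: subset_leq_card; apply/subsetP => e'; rewrite !inE.
by case/and3P => He' -> /eqP Hh; rewrite (head_flip_ne o He') Hh eqxx.
Qed.

Lemma key G (o : {ffun 'I_(ne G) -> bool}) :
  ncl_instance G -> ncl_solution o ->
  exists o', ncl_solution o' /\ o' != o.
Proof.
case=> Hpos Hloop Hdeg Hbd Hs.
case: (boolP [exists e, ncl_solution (flipo o e)]).
  by case/existsP => e He; exists (flipo o e); split => //; exact: flip_neq.
move/existsPn => Hn.
have Hcrit := fun e => crit (Hs) (Hn e).
exists (revo o); split; last first.
  have := Hdeg (Ordinal Hpos); rewrite /degree => Hd.
  have : 0 < #|[set e | incident (Ordinal Hpos) e]| by rewrite Hd.
  case/card_gt0P => e _.
  apply/eqP => H; have := congr1 (fun f : {ffun _ -> bool} => f e) H.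
  by rewrite /revo ffunE; case: (o e).
apply/forallP => v.
have Hsv := forallP Hs v.
case: (set_0Vmem [set e | blue e && (head o e == v)]) => [H0 | [e He]].
  have : 0 < blue_degree v by case: (Hbd v) => ->.
  case/card_gt0P => e; rewrite inE => /andP [Hb Hi].
  apply/orP; left; apply/card_gt0P; exists e.
  rewrite inE Hb head_rev ?Hloop // Hi /=.
  apply/negP => /eqP Hh.
  have : e \in [set e | blue e && (head o e == v)] by rewrite inE Hb Hh eqxx.
  by rewrite H0 inE.
move: (He); rewrite inE => /andP [Heb /eqP Hev].
have [HB _] := Hcrit e; rewrite Hev in HB.
have HR : forall e', ~~ blue e' -> head o e' != v.
  move=> e' Hr'; apply/negP => /eqP Hh.
  have [HB' _] := Hcrit e'; rewrite Hh in HB'.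
  have : e \in [set e' | blue e' && (head o e' == v)] :\ e'.
    rewrite !inE Heb Hev eqxx !andbT.
    by apply/negP => /eqP Hee; move: Hr'; rewrite -Hee Heb.
  by rewrite HB' inE.
have HB2 : forall e', blue e' -> e' != e -> head o e' != v.
  move=> e' Hb' Hne; apply/negP => /eqP Hh.
  have : e' \in [set e' | blue e' && (head o e' == v)] :\ e.
    by rewrite !inE Hb' Hh eqxx Hne.
  by rewrite HB inE.
have Hsplit : #|[set e | incident v e]| =
   blue_degree v + #|[set e | ~~ blue e && incident v e]|.
  rewrite -(cardsID [set e | blue e] [set e | incident v e]) /blue_degree.
  congr (_ + _); apply: eq_card => e'; rewrite !inE //; by rewrite andbC.
have Hd := Hdeg v; rewrite /degree in Hd.
case: (Hbd v) => Hbv.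
  apply/orP; right.
  have Hr2 : #|[set e | ~~ blue e && incident v e]| = 2.
    by move: Hd; rewrite Hsplit Hbv => [[]].
  rewrite -Hr2 /in_red; apply: subset_leq_card; apply/subsetP => e'.
  rewrite !inE => /andP [Hr' Hi']; rewrite Hr' head_rev ?Hloop // Hi' /=.
  exact: HR.
apply/orP; left.
have Hb3 : #|[set e | blue e && incident v e] :\ e| >= 2.
  have := cardsD1 e [set e | blue e && incident v e].
  rewrite -/(blue_degree v) Hbv.
  move=> H3; rewrite -(leq_add2l 1); apply: (@leq_trans 3) => //; rewrite H3 leq_add2r; exact: leq_b1.
apply: leq_trans (leq_trans _ Hb3) _ => //.
rewrite /in_blue; apply: subset_leq_card; apply/subsetP => e'.
rewrite !inE => /andP [Hne /andP [Hb' Hi']]; rewrite Hb' head_rev ?Hloop // Hi' /=.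
exact: HB2.
Qed.

Theorem corollary19 :
  ~ exists f : cnf -> ncl_graph,
      (forall F, ncl_instance (f F)) /\
      (forall F, count_sat F = count_ncl (f F)).
Proof.
case=> f [Hi Hc].
pose F := @Cnf 1 [:: [:: (ord0, true)]].
have H1 : count_sat F = 1.
  rewrite /count_sat; apply/eqP/cards1P; exists [ffun _ => true].
  apply/setP => a; rewrite !inE /sat_assign /=.
  rewrite andbT orbF; apply/eqP/eqP => [Ha|->]; last by rewrite ffunE.
  by apply/ffunP => i; rewrite ffunE (ord1 i).
move: (Hc F); rewrite H1 /count_ncl => /esym/eqP/cards1P [o Ho].
have : o \in [set o' | ncl_solution o'] by rewrite Ho inE.
rewrite inE => Hs.
have [o' [Hs' Hne]] := key (Hi F) Hs.
have : o' \in [set o' | ncl_solution o'] by rewrite inE.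
by rewrite Ho inE (negbTE Hne).
Qed.
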